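(* Let $F=\{\mathbb{R}^{n};f_{1},\dots,f_{m}\}$ be an IFS of contractive similitudes (consisting of at least two distinct maps), let $T\subset\mathbb{R}^{n}$ be closed, and let $c$ be a cost function as described in the context. Then for every $\mathbf{i}\in\Sigma^{\infty}$ and every $k\geq 0$, $\Pi_{T}(\mathbf{i}|k)$ and $\Pi_{T}(\mathbf{i})$ are well-defined collections of closed subsets of $\mathbb{R}^{n}$, and \[ \Pi_{T}(\mathbf{i}|0)\subset\Pi_{T}(\mathbf{i}|1)\subset\Pi_{T}(\mathbf{i}|2)\subset\cdots . \]
   Context: An IFS $F=\{\mathbb{R}^{n};f_{1},\dots,f_{m}\}$ is a finite collection of maps $f_{i}:\mathbb{R}^{n}\to\mathbb{R}^{n}$ with $|f_{i}(x)-f_{i}(y)|=\lambda_{i}|x-y|$, $\lambda_{i}\in(0,1)$. Let $\Sigma=\{1,\dots,m\}$, $\Sigma^{\infty}$ the set of infinite sequences $\mathbf{i}=i_{1}i_{2}\dots$ over $\Sigma$, and for $\mathbf{i}\in\Sigma^{\infty}$ write $\mathbf{i}|k=i_{1}\dots i_{k}$, $\mathbf{i}|0=\emptyset$. Write $f_{(\mathbf{j}|l)}=f_{j_{1}}\circ\cdots\circ f_{j_{l}}$ and $f_{-(\mathbf{i}|k)}=f_{i_{1}}^{-1}\circ\cdots\circ f_{i_{k}}^{-1}$ (identity for $k=0$). Assign costs $c_{i}>0$ to the maps $f_i$ and define $c(\mathbf{i}|k)=c_{i_{1}}+\cdots+c_{i_{k}}$, $c(\emptyset)=0$. Define \[ \Pi_{T}(\mathbf{i}|k)=f_{-(\mathbf{i}|k)}\big(\{f_{(\mathbf{j}|l)}(T):\mathbf{j}\in\Sigma^{\infty},\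 l\in\mathbb{N},\ c(\mathbf{j}|l-1)\leq c(\mathbf{i}|k)<c(\mathbf{j}|l)\}\big), \] with $\Pi_{T}(\emptyset)=\{f_{1}(T),\dots,f_{m}(T)\}$, and $\Pi_{T}(\mathbf{i})=\bigcup_{k\geq1}\Pi_{T}(\mathbf{i}|k)$. Here $\mathbb{N}=\{1,2,\dots\}$ and a map applied to a collection of sets is applied to each member. *)

(* Defs.v *)
(* R : realType, points of R^n are row vectors 'rV[R]_n
   (their canonical topology is the product = Euclidean topology). *)
From HB Require Import structures.
From mathcomp Require Import all_boot all_order all_algebra.
From mathcomp Require Import all_classical all_reals all_analysis.
Set Implicit Arguments. Unset Strict Implicit. Unset Printing Implicit Defensive.
Import Order.TTheory GRing.Theory Num.Theory numFieldNormedType.Exports.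
Local Open Scope classical_set_scope.
Local Open Scope ring_scope.

Section IFSDefs.
Variables (R : realType) (n m : nat).
Notation V := 'rV[R]_n.

Definition euclid_dist (x y : V) : R := Num.sqrt (\sum_(k < n) (x 0 k - y 0 k) ^+ 2).

(* f : IFS maps, c : costs, words are infinite sequences nat -> 'I_m
   (the letter i_{t+1} is (i t)). *)
Variables (f : 'I_m -> V -> V) (c : 'I_m -> R).

Definition cost (i : nat -> 'I_m) (k : nat) : R := \sum_(t < k) c (i t).

Fixpoint fword (j : nat -> 'I_m) (l : nat) : V -> V :=
  match l with
  | 0 => id
  | l'.+1 => fword j l' \o f (j l')
  end.

(* f_{-(i|k)}(A) = f_{i_1}^{-1}( ... f_{i_k}^{-1}(A) ...), inverses of sets
   rendered as preimages *)
Fixpoint finvword (i : nat -> 'I_m) (k : nat) (A : set V) : set V :=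
  match k with
  | 0 => A
  | k'.+1 => finvword i k' (f (i k') @^-1` A)
  end.

Definition PiT (T : set V) (i : nat -> 'I_m) (k : nat) : set (set V) :=
  match k with
  | 0 => [set f a @` T | a in [set: 'I_m]]
  | _ => [set B | exists j : nat -> 'I_m, exists l : nat,
            (0 < l)%N /\ cost j l.-1 <= cost i k /\ cost i k < cost j l /\
            B = finvword i k (fword j l @` T)]
  end.

Definition PiT_inf (T : set V) (i : nat -> 'I_m) : set (set V) :=
  \bigcup_(k in [set k : nat | (0 < k)%N]) PiT T i k.

End IFSDefs.

(* Main.v *)
Require Import Defs.
From HB Require Import structures.
From mathcomp Require Import all_boot all_order all_algebra.
From mathcomp Require Import all_classical all_reals all_analysis.
From mathcomp Require Import lra ring.
Import Order.TTheory GRing.Theory Num.Theory numFieldNormedType.Exports.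
Local Open Scope classical_set_scope.
Local Open Scope ring_scope.

Set Implicit Arguments. Unset Strict Implicit.
Section LA.
Variables (R : realType) (n : nat).
Notation V := 'rV[R]_n.
Definition dot (u v : V) : R := \sum_k u 0 k * v 0 k.

Lemma dotC u v : dot u v = dot v u.
Proof. by apply: eq_bigr => k _; rewrite mulrC. Qed.

Lemma dotBB u v : dot (u - v) (u - v) = dot u u + dot v v - 2 * dot u v.
Proof.
rewrite /dot mulr_sumr -big_split -sumrB /=; apply: eq_bigr => k _.
rewrite !mxE; ring.
Qed.

Lemma dotZZ c u : dot (c *: u) (c *: u) = c ^+ 2 * dot u u.
Proof. rewrite /dot mulr_sumr; apply: eq_bigr => k _; rewrite !mxE; ring. Qed.

Lemma dot_ge0 u : 0 <= dot u u.
Proof. by apply: sumr_ge0 => k _; rewrite -expr2 sqr_ge0. Qed.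

Lemma dot_delta u i : dot u (delta_mx 0 i) = u 0 i.
Proof.
rewrite /dot (bigD1 i) //= big1 ?addr0; first by rewrite mxE !eqxx mulr1.
by move=> k /negPf ki; rewrite mxE eqxx /= ?ki ?(eq_sym i) ?ki mulr0.
Qed.

Lemma dot_mx u (N : 'M[R]_n) j : (u *m N^T) 0 j = dot u (row j N).
Proof. by rewrite !mxE; apply: eq_bigr => k _; rewrite !mxE. Qed.

Lemma iso_lin (h : V -> V) : h 0 = 0 ->
  (forall x y, dot (h x - h y) (h x - h y) = dot (x - y) (x - y)) ->
  exists M : 'M[R]_n, (forall x, h x = x *m M) /\ M^T *m M = 1%:M /\
     M *m M^T = 1%:M.
Proof.
move=> h0 hd.
have hn x : dot (h x) (h x) = dot x x.
  by have := hd x 0; rewrite h0 !subr0.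
have hdot x y : dot (h x) (h y) = dot x y.
  have := hd x y; rewrite !dotBB !hn => E.
  have : 2 * dot (h x) (h y) = 2 * dot x y by lra.
  by move/(congr1 (fun t => t / 2)); rewrite ![2 * _ / 2]mulrC !mulKf ?pnatr_eq0.
pose M : 'M[R]_n := \matrix_(i < n) h (delta_mx 0 i).
have rowM i : row i M = h (delta_mx 0 i) by rewrite rowK.
have key x : h x *m M^T = x.
  by apply/rowP => j; rewrite dot_mx rowM hdot dot_delta.
have MMT : M *m M^T = 1%:M.
  apply/matrixP => i j.
  transitivity ((row i M *m M^T) 0 j).
    by rewrite !mxE; apply: eq_bigr => k _; rewrite !mxE.
  rewrite rowM key.
  by rewrite !mxE eqxx /= eq_sym.
have MTM := mulmx1C MMT.
exists M; split => [x|]; last by [].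
by rewrite -[h x]mulmx1 -MTM mulmxA key.
Qed.
End LA.

Section Sim.
Variables (R : realType) (n : nat).
Notation V := 'rV[R]_n.

Lemma euclid_dotE (x y : V) : euclid_dist x y = Num.sqrt (dot (x - y) (x - y)).
Proof. by rewrite /euclid_dist /dot; congr Num.sqrt; apply: eq_bigr => k _; rewrite !mxE expr2. Qed.

Lemma sim_lin (g : V -> V) (L : R) : 0 < L ->
  (forall x y, euclid_dist (g x) (g y) = L * euclid_dist x y) ->
  exists M : 'M[R]_n, (forall x, g x = g 0 + L *: (x *m M)) /\ M^T *m M = 1%:M.
Proof.
move=> L0 hg.
have hg2 x y : dot (g x - g y) (g x - g y) = L ^+ 2 * dot (x - y) (x - y).
  have := congr1 (fun t => t ^+ 2) (hg x y).
  by rewrite /= exprMn !euclid_dotE !sqr_sqrtr ?dot_ge0.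
pose h x := L^-1 *: (g x - g 0).
have h0 : h 0 = 0 by rewrite /h subrr scaler0.
have hd x y : dot (h x - h y) (h x - h y) = dot (x - y) (x - y).
  rewrite /h -scalerBr opprB addrA subrK dotZZ hg2 mulrA -exprMn.
  by rewrite mulVf ?gt_eqF // expr1n mul1r.
have [M [hM [MTM _]]] := iso_lin h0 hd.
exists M; split => // x; rewrite -hM /h scalerA mulfV ?gt_eqF // scale1r.
by rewrite addrC subrK.
Qed.

Lemma cont_sum (I : Type) (r : seq I) (F : I -> V -> V) :
  (forall k, continuous (F k)) -> continuous (fun x => \sum_(k <- r) F k x).
Proof.
move=> HF; elim: r => [|a r IH].
  have -> : (fun x => \sum_(k <- [::]) F k x) = fun _ => 0.
    by apply: funext => y; rewrite big_nil.
  exact: cst_continuous.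
have -> : (fun x => \sum_(k <- a :: r) F k x) =
   (F a + (fun x => \sum_(k <- r) F k x))%R.
  by apply: funext => y; rewrite big_cons.
move=> x; exact: (continuousD (HF a x) (IH x)).
Qed.

Lemma cont_aff (c : R) (a b : V) (N : 'M[R]_n) :
  continuous (fun x : V => (c *: (x - a)) *m N + b).
Proof.
have cN : continuous (fun x : V => x *m N).
  have -> : (fun x : V => x *m N) = fun x => \sum_(k < n) x 0 k *: row k N.
    by apply: funext => y; rewrite mulmx_sum_row.
  apply: cont_sum => k x.
  apply: continuousZr_tmp; exact: coord_continuous.
have cA : continuous (fun x : V => c *: (x - a)).
  have -> : (fun x : V => c *: (x - a)) = (c \*: ((fun x => x) - (fun _ => a)))%R.
    by apply: funext => y.
  move=> x; apply: continuousZl_tmp; apply: continuousB;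
    [exact: cvg_id | exact: cst_continuous].
have -> : (fun x : V => (c *: (x - a)) *m N + b) =
  (((fun x : V => x *m N) \o (fun x : V => c *: (x - a))) + (fun _ => b))%R.
  by apply: funext => y.
move=> x; apply: continuousD; last exact: cst_continuous.
apply: continuous_comp; [exact: cA | exact: cN].
Qed.

End Sim.
Unset Implicit Arguments. Set Strict Implicit.

Lemma sim_props (R : realType) (n : nat) (g : 'rV[R]_n -> 'rV[R]_n) (L : R) :
  0 < L -> (forall x y, euclid_dist (g x) (g y) = L * euclid_dist x y) ->
  exists gi, cancel g gi /\ cancel gi g /\ continuous g /\ continuous gi.
Proof.
move=> L0 hg; have [M [gM MTM]] := sim_lin L0 hg.
have MMT := mulmx1C MTM.
pose gi y := (L^-1 *: (y - g 0)) *m M^T + 0.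
exists gi; split; [|split; [|split]].
- move=> x; rewrite /gi gM addrAC subrr add0r scalerA mulVf ?gt_eqF //.
  by rewrite scale1r -mulmxA MMT mulmx1 addr0.
- move=> y; rewrite gM /gi addr0 -mulmxA MTM mulmx1 scalerA mulfV ?gt_eqF //.
  by rewrite scale1r addrC subrK.
- have -> : g = fun x => (L *: (x - 0)) *m M + g 0.
    by apply: funext => x; rewrite gM subr0 -scalemxAl addrC.
  exact: cont_aff.
- exact: cont_aff.
Qed.

Lemma fword_S (R : realType) (n m : nat) (f : 'I_m -> 'rV[R]_n -> 'rV[R]_n)
  (j : nat -> 'I_m) (l : nat) (x : 'rV[R]_n) :
  fword f j l.+1 x = f (j 0%N) (fword f (fun t => j t.+1) l x).
Proof.
elim: l x => [|l IH] x //=.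
by have := IH (f (j l.+1) x).
Qed.

Theorem theorem2 (R : realType) (n m : nat)
  (f : 'I_m -> 'rV[R]_n -> 'rV[R]_n) (lam : 'I_m -> R) (c : 'I_m -> R)
  (T : set 'rV[R]_n) :
  (forall a, 0 < lam a < 1) ->
  (forall a x y, euclid_dist (f a x) (f a y) = lam a * euclid_dist x y) ->
  (exists a b, f a <> f b) ->
  closed T ->
  (forall a, 0 < c a) ->
  (forall a, bijective (f a)) /\
  (forall (i : nat -> 'I_m) (k : nat) (B : set 'rV[R]_n),
      PiT f c T i k B -> closed B) /\
  (forall (i : nat -> 'I_m) (B : set 'rV[R]_n),
      PiT_inf f c T i B -> closed B) /\
  (forall (i : nat -> 'I_m) (k : nat), PiT f c T i k `<=` PiT f c T i k.+1).
Proof.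
move=> Hlam Hd _ cT Hc.
have P a : exists gi, cancel (f a) gi /\ cancel gi (f a) /\ continuous (f a) /\ continuous gi.
  apply: (@sim_props R n (f a) (lam a)); last exact: Hd.
  by case/andP: (Hlam a).
have Hinj a : injective (f a).
  by have [gi [c1 _]] := P a; exact: can_inj c1.
have cl_img a A : closed A -> closed (f a @` A).
  have [gi [c1 [c2 [_ cg]]]] := P a => cA.
  have -> : f a @` A = gi @^-1` A.
    apply/seteqP; split => y /=.
      by case=> x Ax <-; rewrite c1.
    by move=> Ay; exists (gi y) => //; rewrite c2.
  by apply: preimage_closed => // x _; exact: cg.
have cl_pre a A : closed A -> closed (f a @^-1` A).
  have [gi [c1 [c2 [cf _]]]] := P a => cA.
  by apply: preimage_closed => // x _; exact: cf.
have cl_fw j l A : closed A -> closed (fword f j l @` A).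
  elim: l A => [|l IH] A cA /=; first by rewrite image_id.
  by rewrite -image_comp; apply: IH; exact: cl_img.
have cl_fi i k A : closed A -> closed (finvword f i k A).
  elim: k A => [|k IH] A cA //=.
  by apply: IH; exact: cl_pre.
have cl_Pi i k B : PiT f c T i k B -> closed B.
  case: k => [|k] /=.
    by case=> a _ <-; exact: cl_img.
  by case=> j [l [_ [_ [_ ->]]]]; apply: cl_fi; apply: cl_pre; exact: cl_fw cT.
split; first by move=> a; have [gi [c1 [c2 _]]] := P a; exact: Bijective c1 c2.
split; first exact: cl_Pi.
split; first by move=> i B [k _ HB]; exact: cl_Pi HB.
move=> i [|k] B /=.
- case=> a _ <-.
  exists (fun t => if t is 0%N then i 0%N else a), 2%N.
  split => //; split; [|split].
  + by rewrite /cost !big_ord1.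
  + by rewrite /cost big_ord1 big_ord_recr /= big_ord1 ltrDl.
  + apply/seteqP; split => y /=.
      by case=> x Tx <-; exists x.
    by case=> x Tx /Hinj <-; exists x.
- case=> j [l [l0 [c1 [c2 ->]]]].
  exists (fun t => if t is t'.+1 then j t' else i k.+1), l.+1.
  have cS p : cost c (fun t => if t is t'.+1 then j t' else i k.+1) p.+1 =
            c (i k.+1) + cost c j p.
    by rewrite /cost big_ord_recl.
  have ciS : cost c i k.+2 = cost c i k.+1 + c (i k.+1).
    by rewrite /cost big_ord_recr.
  split => //; split; [|split].
  + case: l l0 c1 c2 => // l _ c1 c2 /=.
    by rewrite cS ciS addrC lerD2r.
  + by rewrite cS ciS addrC ltrD2l.
  + congr (finvword f i k (f (i k) @^-1` _)).
    apply/seteqP; split => y.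
      case=> x Tx <-; exists x; first exact: Tx.
      rewrite fword_S; reflexivity.
    case=> x Tx; rewrite fword_S => /Hinj <-; exists x; first exact: Tx.
    by [].
Qed.
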